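(* Every $g=(A,v)\in\mathrm{Aff}(n,\mathbb{C})$ with $|\det A|=1$ is a product of at most four coninvolutions in $\mathrm{Aff}(n,\mathbb{C})$.
   Context: $\mathrm{Aff}(n,\mathbb{C})$ is the group of affine maps $z\mapsto Az+v$ of $\mathbb{C}^n$, written $g=(A,v)$ with $A\in\mathrm{GL}(n,\mathbb{C})$, $v\in\mathbb{C}^n$; the product is composition, $(A,v)(B,w)=(AB,Aw+v)$, and the identity is $e=(I_n,0)$. For $g=(A,v)$ set $\overline{g}=(\overline{A},\overline{v})$ (entrywise complex conjugation). An element $h$ is a coninvolution if $h\overline{h}=e$. *)

(* Defs.v *)
From HB Require Import structures.
From mathcomp Require Import all_boot all_order all_algebra.
From mathcomp Require Import complex.
From mathcomp Require Import reals.
Set Implicit Arguments. Unset Strict Implicit. Unset Printing Implicit Defensive.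
Import Order.TTheory GRing.Theory Num.Theory.
Local Open Scope ring_scope.
Local Open Scope complex_scope.

Section Aff.
Variable (R : realType) (n : nat).
Local Notation C := (R[i]).

(* an element (A, v) of Aff(n,C) stands for z |-> A z + v *)
Definition aff := ('M[C]_n * 'cV[C]_n)%type.

Definition in_Aff (g : aff) : bool := g.1 \in unitmx.

Definition aff_mul (g h : aff) : aff := (g.1 *m h.1, g.1 *m h.2 + g.2).

Definition aff_one : aff := (1%:M, 0).

Definition aff_conj (g : aff) : aff :=
  (map_mx Num.conj g.1, map_mx Num.conj g.2).

Definition coninvolution (h : aff) : Prop := aff_mul h (aff_conj h) = aff_one.

Definition aff_prod (hs : seq aff) : aff := foldr aff_mul aff_one hs.
End Aff.

(* Main.v *)
Require Import Defs.
From HB Require Import structures.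
From mathcomp Require Import all_boot all_order all_algebra.
From mathcomp Require Import complex.
From mathcomp Require Import reals.
From mathcomp Require Import ring lra.
Import Order.TTheory GRing.Theory Num.Theory.
Local Open Scope ring_scope.

Section AffGroup.
Variables (R : realType) (n : nat).
Local Notation aff := (aff R n).
Local Notation one := (aff_one R n).
Implicit Types g h x y b : aff.

Lemma aff_mulA g h k : aff_mul g (aff_mul h k) = aff_mul (aff_mul g h) k.
Proof.
by rewrite /aff_mul /= mulmxA mulmxDr mulmxA addrA.
Qed.

Lemma aff_mul1g g : aff_mul one g = g.
Proof. by case: g => A v; rewrite /aff_mul /= !mul1mx addr0. Qed.

Lemma aff_mulg1 g : aff_mul g one = g.
Proof. by case: g => A v; rewrite /aff_mul /= mulmx1 mulmx0 add0r. Qed.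

Lemma aff_conjM g h : aff_conj (aff_mul g h) = aff_mul (aff_conj g) (aff_conj h).
Proof. by rewrite /aff_conj /aff_mul /= map_mxD !map_mxM. Qed.

Lemma aff_conjK g : aff_conj (aff_conj g) = g.
Proof.
case: g => A v; rewrite /aff_conj /=; congr pair; apply/matrixP => i j;
by rewrite !mxE conjCK.
Qed.

Lemma aff_conj1 : aff_conj one = one.
Proof. by rewrite /aff_conj /= map_mx1 map_mx0. Qed.

Lemma coninv_Aff h : coninvolution h -> in_Aff h.
Proof.
rewrite /coninvolution /in_Aff /aff_mul /aff_one => -[E _].
by case: (mulmx1_unit E).
Qed.

Lemma two_coninv x xi b :
  aff_mul x xi = one -> aff_mul xi x = one -> coninvolution b ->
  let h1 := aff_mul x (aff_conj xi) in
  let h2 := aff_mul (aff_conj x) (aff_mul b xi) in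
  [/\ coninvolution h1, coninvolution h2 & aff_mul h1 h2 = aff_mul x (aff_mul b xi)].
Proof.
move=> xxi xix bb h1 h2; rewrite /coninvolution in bb *.
split.
- rewrite /h1 aff_conjM aff_conjK -!aff_mulA (aff_mulA (aff_conj xi)).
  by rewrite -aff_conjM xix aff_conj1 aff_mul1g.
- rewrite /h2 !aff_conjM !aff_conjK -!aff_mulA (aff_mulA xi x) xix aff_mul1g.
  rewrite (aff_mulA b) bb aff_mul1g -aff_conjM xxi aff_conj1 //.
- rewrite /h1 /h2 -aff_mulA (aff_mulA (aff_conj xi)) -aff_conjM xix aff_conj1.
  by rewrite aff_mul1g.
Qed.

End AffGroup.

Section Pivot.
Variable C : numClosedFieldType.

Lemma deltaM_E m (i j : 'I_m) (A : 'M[C]_m) r c :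
  (delta_mx i j *m A) r c = (r == i)%:R * A j c.
Proof.
rewrite mxE (bigD1 j) //= big1 ?addr0 => [|k kj]; rewrite !mxE ?eqxx ?andbT //.
by rewrite (negbTE kj) andbF mul0r.
Qed.

Lemma Mdelta_E m (i j : 'I_m) (A : 'M[C]_m) r c :
  (A *m delta_mx i j) r c = A r i * (j == c)%:R.
Proof.
rewrite mxE (bigD1 i) //= big1 ?addr0 => [|k ki]; rewrite !mxE ?eqxx /=.
  by rewrite eq_sym.
by rewrite (negbTE ki) mulr0.
Qed.

Lemma deltaM_S m (i j : 'I_m) (A : 'M[C]_m) r c :
  \sum_k delta_mx i j r k * A k c = (r == i)%:R * A j c.
Proof. by rewrite -deltaM_E mxE. Qed.

Lemma Mdelta_S m (i j : 'I_m) (A : 'M[C]_m) r c :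
  \sum_k A r k * delta_mx i j k c = A r i * (j == c)%:R.
Proof. by rewrite -Mdelta_E mxE. Qed.

Definition pivot_goal m (A : 'M[C]_m.+1) :=
  exists S Si : 'M[C]_m.+1, [/\ S *m Si = 1%:M, Si *m S = 1%:M &
     `|(S *m A *m Si) 0 0| = 1].
Arguments pivot_goal {m}.

Lemma shear_inv m (i j : 'I_m) (t : C) : i != j ->
  (1%:M + t *: delta_mx i j) *m (1%:M - t *: delta_mx i j) = 1%:M.
Proof.
move=> ij; rewrite mulmxDl mulmxBr !mul1mx mulmxBr mulmx1.
rewrite -scalemxAl -scalemxAr mul_delta_mx_0 ?scaler0 ?subr0; last by rewrite eq_sym.
by rewrite subrK.
Qed.

Lemma shear_E m (i j : 'I_m) (t : C) (A : 'M[C]_m) r c : i != j ->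
  ((1%:M + t *: delta_mx i j) *m A *m (1%:M - t *: delta_mx i j)) r c =
  A r c + t * ((r == i)%:R * A j c) - t * (A r i * (j == c)%:R)
   - t * t * ((r == i)%:R * A j i * (j == c)%:R).
Proof.
move=> ij.
rewrite mulmxDl mul1mx mulmxBr mulmx1 mulmxDl -!scalemxAl -!scalemxAr.
rewrite !mxE deltaM_S !Mdelta_S deltaM_E mulrA.
ring.
Qed.

Lemma shear_inv' m (i j : 'I_m) (t : C) : i != j ->
  (1%:M - t *: delta_mx i j) *m (1%:M + t *: delta_mx i j) = 1%:M.
Proof. by move=> ij; have := @shear_inv _ _ _ (- t) ij; rewrite scaleNr opprK. Qed.

Lemma pivot_trans m (A : 'M[C]_m.+1) (S1 S1i : 'M[C]_m.+1) : S1 *m S1i = 1%:M -> S1i *m S1 = 1%:M ->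
  pivot_goal (S1 *m A *m S1i) -> pivot_goal A.
Proof.
move=> e1 e2 [S [Si [h1 h2 h3]]]; exists (S *m S1), (S1i *m Si); split.
- by rewrite mulmxA -(mulmxA S) e1 mulmx1.
- by rewrite mulmxA -(mulmxA S1i) h2 mulmx1.
- by rewrite !mulmxA -!mulmxA in h3 *; rewrite !mulmxA in h3 *.
Qed.

Lemma pivot_row m (A : 'M[C]_m.+1) k : k != 0 -> A 0 k != 0 -> pivot_goal A.
Proof.
move=> k0 a0; set s := - ((1 - A 0 0) / A 0 k).
exists (1%:M + s *: delta_mx k 0), (1%:M - s *: delta_mx k 0); split.
- exact: shear_inv.
- exact: shear_inv'.
rewrite shear_E // eqxx eq_sym (negbTE k0) /=.
suff -> : A 0 0 + s * (0 * A 0 0) - s * (A 0 k * 1) - s * s * (0 * A 0 k * 1) = 1.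
  by rewrite normr1.
by rewrite /s; field.
Qed.

Lemma pivot_off m (A : 'M[C]_m.+1) k : k != 0 ->
  [|| A 0 k != 0, A k 0 != 0 | A k k != A 0 0] -> pivot_goal A.
Proof.
move=> k0 H; have [a0|/negPn/eqP a0] := boolP (A 0 k != 0).
  exact: (@pivot_row _ A k k0 a0).
have [t tE] : exists t : C, t * (A k k - A 0 0) - t * t * A k 0 != 0.
  have [d0|/negPn/eqP d0] := boolP ((A k k - A 0 0) - A k 0 != 0).
    by exists 1; rewrite !mul1r.
  exists 2; have c2 : A k 0 != 0.
    move: H; rewrite a0 eqxx /= => /orP[//|ne].
    apply/eqP => c0; move: d0; rewrite c0 subr0 => /eqP.
    by rewrite subr_eq0 (negbTE ne).
  have -> : A k k - A 0 0 = A k 0 by apply/eqP; rewrite -subr_eq0 d0.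
  have -> : 2 * A k 0 - 2 * 2 * A k 0 = - (2 * A k 0) by ring.
  by rewrite oppr_eq0 mulf_neq0 // pnatr_eq0.
have ik : (0 : 'I_m.+1) != k by rewrite eq_sym.
apply: (@pivot_trans _ A _ _ (@shear_inv _ 0 k t ik) (@shear_inv' _ 0 k t ik)).
apply: (@pivot_row _ _ k k0).
rewrite shear_E // !eqxx /=.
move: tE; apply: contra_neq => <-; rewrite a0; ring.
Qed.

Lemma pivot_inner m (A : 'M[C]_m.+1) j k : j != 0 -> k != 0 -> j != k ->
  A 0 k = 0 -> A j k != 0 -> pivot_goal A.
Proof.
move=> j0 k0 jk a0 ajk.
have ij : (0 : 'I_m.+1) != j by rewrite eq_sym.
apply: (@pivot_trans _ A _ _ (@shear_inv _ 0 j 1 ij) (@shear_inv' _ 0 j 1 ij)).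
apply: (@pivot_row _ _ k k0).
rewrite shear_E // eqxx (negbTE jk) /= a0.
move: ajk; apply: contra_neq => <-; ring.
Qed.

Lemma pivot m (A : 'M[C]_m.+1) : `|\det A| = 1 -> pivot_goal A.
Proof.
move=> dA.
have [/existsP[k /andP[k0 H]]|H1] :=
  boolP [exists k, (k != 0) && [|| A 0 k != 0, A k 0 != 0 | A k k != A 0 0]].
  exact: (@pivot_off _ A k k0 H).
have H2 : forall k, k != 0 -> [/\ A 0 k = 0, A k 0 = 0 & A k k = A 0 0].
  move=> k k0; move/existsPn: H1 => /(_ k); rewrite k0 /= !negb_or !negbK.
  by case/and3P => /eqP -> /eqP -> /eqP ->.
have [/existsP[j /existsP[k /andP[/andP[/andP[j0 k0] jk] ajk]]]|H3] :=
  boolP [exists j, exists k, (j != 0) && (k != 0) && (j != k) && (A j k != 0)].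
  by case: (H2 k k0) => a0 _ _; exact: (@pivot_inner _ A j k j0 k0 jk a0 ajk).
have AE : A = (A 0 0)%:M.
  apply/matrixP => i j; rewrite mxE.
  have [<-|ij] := eqVneq i j.
    by rewrite mulr1n; have [->//|i0] := eqVneq i 0; case: (H2 i i0).
  rewrite mulr0n.
  have [i0|i0] := eqVneq i 0.
    subst i; have j0 : j != 0 by rewrite eq_sym.
    by case: (H2 j j0).
  have [j0|j0] := eqVneq j 0.
    by subst j; case: (H2 i i0).
  move/existsPn: H3 => /(_ i) /existsPn /(_ j).
  by rewrite i0 j0 ij /= => /negPn /eqP.
exists 1%:M, 1%:M; split; rewrite ?mulmx1 ?mul1mx //.
move: dA; rewrite {1}AE det_scalar normrX => /eqP.
by rewrite pexpr_eq1 // => /eqP.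
Qed.

Lemma LU n (A : 'M[C]_n) : `|\det A| = 1 ->
  exists S L U : 'M[C]_n, [/\ S \in unitmx, is_trig_mx L, is_trig_mx U^T,
    (forall i, `|L i i| = 1 /\ `|U i i| = 1) & S *m A = L *m U *m S].
Proof.
elim: n A => [|n IH] A dA.
  exists 1%:M, 1%:M, 1%:M; split; rewrite ?unitmx1 ?tr_scalar_mx ?scalar_mx_is_trig //.
  - by case.
  - by apply/matrixP => -[].
have [S0 [S0i [e1 e2 piv]]] := @pivot _ A dA.
have S0u : S0 \in unitmx by case: (mulmx1_unit e1).
set B := S0 *m A *m S0i.
have dB : \det B = \det A.
  by rewrite /B !det_mulmx mulrAC -det_mulmx e1 det1 mul1r.
have BS : B *m S0 = S0 *m A by rewrite /B -mulmxA e2 mulmx1.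
pose B1 : 'M[C]_(1 + n) := B.
pose a := B 0 0.
have l0 : lshift n (0 : 'I_1) = 0 :> 'I_n.+1 by apply/val_inj.
have ulE : ulsubmx B1 = a%:M.
  apply/matrixP => i j; rewrite !ord1 [RHS]mxE eqxx mulr1n.
  by have := block_mxEul (ulsubmx B1) (ursubmx B1) (dlsubmx B1) (drsubmx B1) 0 0; rewrite submxK l0.
set r := ursubmx B1; set c := dlsubmx B1; set B' := drsubmx B1.
have BE : B1 = block_mx a%:M r c B' by rewrite -ulE submxK.
have a1 : `|a| = 1 by [].
have a0 : a != 0 by rewrite -normr_eq0 a1 oner_eq0.
pose B'' := B' - a^-1 *: (c *m r).
have BF : B1 = block_mx 1%:M 0 (a^-1 *: c) 1%:M *m block_mx a%:M r 0 B''.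
  rewrite mulmx_block !mul1mx !mul0mx !addr0 mul_mx_scalar scalerA mulfV //.
  by rewrite scale1r BE /B'' -scalemxAl addrC subrK.
have dB'' : `|\det B''| = 1.
  move: dA; rewrite -dB -/B1 BF det_mulmx (@det_lblock _ 1 n) (@det_ublock _ 1 n) !det1 det_scalar.
  by rewrite expr1 !mul1r normrM a1 mul1r.
have [S' [L' [U' [S'u L't U't LUd S'E]]]] := IH B'' dB''.
exists ((block_mx (1%:M : 'M_1) 0 0 S' : 'M_n.+1) *m S0),
  (block_mx (1%:M : 'M_1) 0 (S' *m (a^-1 *: c)) L'),
  (block_mx (a%:M : 'M_1) (r *m invmx S') 0 U'); split.
- rewrite unitmx_mul S0u andbT unitmxE (@det_ublock _ 1 n) det1 mul1r -unitmxE //.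
- by rewrite (@is_trig_block_mx _ 1 n 1 n) // eqxx scalar_mx_is_trig.
- by rewrite (@tr_block_mx _ 1 n 1 n) (@is_trig_block_mx _ 1 n 1 n) // trmx0 eqxx tr_scalar_mx scalar_mx_is_trig.
- move=> i; case: (@split_ordP 1 n i) => k ->.
    by rewrite !(@block_mxEul _ 1 n 1 n) !mxE eqxx mulr1n normr1.
  by rewrite !(@block_mxEdr _ 1 n 1 n).
rewrite -mulmxA -BS mulmxA [RHS]mulmxA; congr (_ *m _).
have BE' : B = block_mx a%:M r c B' := BE.
rewrite BE' !(@mulmx_block _ 1 n 1 n 1 n) !mul1mx !mul0mx !mulmx0 ?mulmx1 !addr0 !add0r.
f_equal.
- by rewrite mulmxKV.
- by rewrite mul_mx_scalar -scalemxAr scalerA mulfV // scale1r.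
rewrite mulmxDl -mulmxA -S'E /B'' mulmxBr !mulmxA mulmxKV // -!scalemxAr -scalemxAl.
by rewrite -mulmxA addrC subrK.
Qed.

Lemma trig_diag n (M : 'M[C]_n) : is_trig_mx M -> uniq [seq M i i | i : 'I_n] ->
  exists (P : 'M[C]_n) (d : 'rV[C]_n), [/\ P \in unitmx, P *m M = diag_mx d *m P &
    forall j, d 0 j \in [seq M i i | i : 'I_n]].
Proof.
case: n M => [|n] M Mt Mu.
  exists 1%:M, 0; split; rewrite ?unitmx1 //; first by apply/matrixP => -[].
  by case.
have Pprod : \prod_(x <- [seq M i i | i : 'I_n.+1]) ('X - x%:P) = char_poly M.
  by rewrite char_poly_trig // big_image.
have : diagonalizable M.
  apply/diagonalizableP; exists [seq M i i | i : 'I_n.+1] => //.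
  by rewrite Pprod mxminpoly_dvd_char.
case=> P Pu /similar_diagPex [d /(similarP Pu) PE].
exists P, d; split => // j.
have ev : eigenvalue M (d 0 j).
  apply/eigenvalueP; exists (row j P).
    by rewrite -row_mul PE row_mul row_diag_mx -scalemxAl -rowE.
  apply/eqP => h; have := congr1 (mulmx^~ (invmx P)) h.
  rewrite /= -row_mul mulmxV // row1 mul0mx => /matrixP/(_ 0 j).
  by rewrite !mxE !eqxx /= => /eqP; rewrite oner_eq0.
by move: ev; rewrite eigenvalue_root_char -Pprod root_prod_XsubC.
Qed.

Definition wz (m : nat) : C := m%:R + 'i.
Definition zz (m : nat) : C := wz m / (wz m)^*.

Lemma wzC m : (wz m)^* = m%:R - 'i.
Proof. by rewrite /wz rmorphD /= conjCi rmorph_nat. Qed.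

Lemma wz_neq0 m : wz m != 0.
Proof.
apply/eqP => h; have : wz m * (wz m)^* = 0 by rewrite h mul0r.
rewrite wzC /wz.
have -> : (m%:R + 'i) * (m%:R - 'i) = (m ^ 2).+1%:R :> C.
  by rewrite -addn1 natrD natrX mulrDl !mulrBr -expr2 sqrCi; ring.
by move/eqP; rewrite pnatr_eq0.
Qed.

Lemma zz_norm m : `|zz m| = 1.
Proof.
rewrite /zz normf_div norm_conjC divff // normr_eq0 wz_neq0 //.
Qed.

Lemma zz_inj : injective zz.
Proof.
move=> m k; rewrite /zz => /eqP.
rewrite eqr_div ?wz_neq0 ?conjC_eq0 ?wz_neq0 // !wzC /wz => /eqP h.
have : 2%:R * 'i * (k%:R - m%:R) = 0 :> C.
  by rewrite -(subrr ((m%:R + 'i) * (k%:R - 'i))) {2}h; ring.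
move/eqP; rewrite !mulf_eq0 pnatr_eq0 (negbTE (neq0Ci C)) /= subr_eq0 eqr_nat.
by move/eqP.
Qed.

Lemma avoid (s : seq C) : exists z : C, `|z| = 1 /\ z \notin s.
Proof.
have [/allP sub|/allPn [z /mapP [m _ ->] zs]] :=
  boolP (all (mem s) (map zz (iota 0 (size s).+1))).
  have := uniq_leq_size _ sub; rewrite map_inj_uniq ?iota_uniq //; last exact: zz_inj.
  by rewrite size_map size_iota ltnn => /(_ isT).
by exists (zz m); rewrite zz_norm.
Qed.

Lemma choose_nat (aN bN : nat -> C) : (forall m, aN m != 0) -> (forall m, bN m != 0) ->
  forall k, exists dN : nat -> C, [/\ forall m, `|dN m| = 1,
    uniq [seq aN m * dN m | m <- iota 0 k], uniq [seq bN m / dN m | m <- iota 0 k] &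
    forall m, (m < k)%N -> bN m / dN m != 1].
Proof.
move=> a0 b0; elim=> [|k [dN [d1 ua ub b1]]].
  by exists (fun _ => 1); split => // m; rewrite normr1.
set pa := [seq aN m * dN m | m <- iota 0 k].
set pb := [seq bN m / dN m | m <- iota 0 k].
have [z [z1 zs]] := avoid ([seq x / aN k | x <- pa] ++ [seq bN k / q | q <- 1 :: pb]).
have z0 : z != 0 by rewrite -normr_eq0 z1 oner_eq0.
pose dN' m := if m == k then z else dN m.
have eqk (F : nat -> C -> C) : [seq F m (dN' m) | m <- iota 0 k] = [seq F m (dN m) | m <- iota 0 k].
  apply/eq_in_map => m; rewrite mem_iota add0n => /andP[_ mk].
  by rewrite /dN' ltn_eqF.
exists dN'; split.
- by move=> m; rewrite /dN'; case: eqP.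
- rewrite -addn1 iotaD map_cat cat_uniq /= add0n (eqk (fun m d => aN m * d)) -/pa ua /=.
  rewrite /dN' eqxx orbF andbT; apply: contra zs => h.
  by rewrite mem_cat; apply/orP; left; apply/mapP; exists (aN k * z) => //; rewrite mulrAC mulfV // mul1r.
- rewrite -addn1 iotaD map_cat cat_uniq /= add0n (eqk (fun m d => bN m / d)) -/pb ub /=.
  rewrite /dN' eqxx orbF andbT; apply: contra zs => h.
  rewrite mem_cat; apply/orP; right; apply/mapP; exists (bN k / z); first by rewrite inE h orbT.
  by rewrite invf_div mulrC mulfVK.
- move=> m; rewrite ltnS leq_eqVlt => /orP[/eqP ->|mk].
    rewrite /dN' eqxx; apply: contra zs => /eqP h.
    rewrite mem_cat; apply/orP; right; apply/mapP; exists 1; first by rewrite inE eqxx.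
    by rewrite divr1 -[bN k](divfK z0) h mul1r.
  by rewrite /dN' ltn_eqF //; exact: b1.
Qed.

End Pivot.

Section Main.
Variable R : realType.
Local Notation C := (R[i]).

Lemma map_ord_iota n (F : 'I_n -> C) (G : nat -> C) : (forall i : 'I_n, F i = G i) ->
  [seq F i | i : 'I_n] = [seq G m | m <- iota 0 n].
Proof. by move=> FG; rewrite -val_enum_ord -map_comp; apply/eq_map => i /=. Qed.

Lemma diag_coninv n (e : 'rV[C]_n) : (forall i, `|e 0 i| = 1) ->
  coninvolution ((diag_mx e, 0) : aff R n).
Proof.
move=> e1; rewrite /coninvolution /aff_mul /aff_conj /aff_one /=.
rewrite map_mx0 !mulmx0 addr0; congr pair.
apply/matrixP => i j; rewrite mul_diag_mx !mxE.
have [->|ij] := eqVneq i j; last by rewrite mulr0n rmorph0 mulr0.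
by rewrite mulr1n -normCK e1 expr1n.
Qed.

End Main.

Theorem theorem3 (R : realType) (n : nat) (g : aff R n) :
  in_Aff g -> `|\det g.1| = 1 ->
  exists hs : seq (aff R n),
    [/\ (size hs <= 4)%N,
        (forall h, h \in hs -> in_Aff h /\ coninvolution h)
      & aff_prod hs = g].
Proof.
case: g => A v; rewrite /in_Aff /= => Au dA.
have [S [L [U [Su Lt Ut LUd SA]]]] := @LU _ _ A dA.
pose aN m := if (insub m : option 'I_n) is Some i then L i i else 1.
pose bN m := if (insub m : option 'I_n) is Some i then U i i else 1.
have a0 m : aN m != 0.
  rewrite /aN; case: insub => [i|]; last exact: oner_neq0.
  by rewrite -normr_eq0 (LUd _).1 oner_eq0.
have b0 m : bN m != 0.
  rewrite /bN; case: insub => [i|]; last exact: oner_neq0.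
  by rewrite -normr_eq0 (LUd _).2 oner_eq0.
have [dN [d1 ua ub b1]] := @choose_nat _ aN bN a0 b0 n.
have dN0 m : dN m != 0 by rewrite -normr_eq0 d1 oner_eq0.
pose d : 'rV[R[i]]_n := \row_i dN i.
pose di : 'rV[R[i]]_n := \row_i (dN i)^-1.
pose L' := L *m diag_mx d.
pose U' := diag_mx di *m U.
have ddi : diag_mx d *m diag_mx di = 1%:M.
  apply/matrixP => i j; rewrite mul_diag_mx !mxE.
  have [->|ij] := eqVneq i j; last by rewrite !mulr0n mulr0.
  by rewrite !mulr1n mulfV.
have LU' : L' *m U' = L *m U by rewrite /L' /U' -mulmxA (mulmxA (diag_mx d)) ddi mul1mx.
have L'E i : L' i i = aN i * dN i.
  by rewrite /L' mul_mx_diag !mxE /aN valK.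
have U'E i : U' i i = bN i / dN i.
  by rewrite /U' mul_diag_mx !mxE /bN valK mulrC.
have L't : is_trig_mx L'.
  apply/is_trig_mxP => i j ij; rewrite /L' mul_mx_diag mxE.
  by move/is_trig_mxP: Lt => ->; rewrite ?mul0r.
have U't : is_trig_mx U'^T.
  apply/is_trig_mxP => i j ij; rewrite /U' mxE mul_diag_mx mxE.
  by move/is_trig_mxP: Ut => /(_ i j ij); rewrite mxE => ->; rewrite mulr0.
have [P1 [e1 [P1u P1E e1in]]] := @trig_diag _ _ _ L't (etrans (congr1 uniq (@map_ord_iota _ _ _ _ L'E)) ua).
have U'TE i : U'^T i i = bN i / dN i by rewrite mxE U'E.
have [P2 [e2 [P2u P2E e2in]]] := @trig_diag _ _ _ U't (etrans (congr1 uniq (@map_ord_iota _ _ _ _ U'TE)) ub).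
have aN1 (i : 'I_n) : `|aN i| = 1 by rewrite /aN valK (LUd i).1.
have bN1 (i : 'I_n) : `|bN i| = 1 by rewrite /bN valK (LUd i).2.
have e1n j : `|e1 0 j| = 1.
  by case/mapP: (e1in j) => i _ ->; rewrite L'E normrM aN1 mul1r d1.
have e2n j : `|e2 0 j| = 1.
  by case/mapP: (e2in j) => i _ ->; rewrite U'TE normf_div bN1 d1 divr1.
have P2Tu : P2^T \in unitmx by rewrite unitmx_tr.
pose Q2 := invmx P2^T.
have Q2u : Q2 \in unitmx by rewrite unitmx_inv.
have H2 : U' *m P2^T = P2^T *m diag_mx e2.
  by have := congr1 trmx P2E; rewrite trmx_mul trmxK [RHS]trmx_mul tr_diag_mx.
have Q2E : Q2 *m U' = diag_mx e2 *m Q2.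
  by rewrite -[LHS](mulmxK P2Tu) -(mulmxA Q2) H2 mulmxA mulVmx ?mul1mx.
have L'E2 : L' = invmx P1 *m diag_mx e1 *m P1 by rewrite -mulmxA -P1E mulKmx.
have U'E2 : U' = invmx Q2 *m diag_mx e2 *m Q2 by rewrite -mulmxA -Q2E mulKmx.
clearbody aN bN d di L' U' Q2.
have [X XE] : {X : 'M[R[i]]_n | X = invmx S *m L' *m S} by eexists.
have [Y YE] : {Y : 'M[R[i]]_n | Y = invmx S *m U' *m S} by eexists.
have AXY : A = X *m Y.
  have : X *m Y = invmx S *m (S *m A).
    by rewrite SA -LU' XE YE !mulmxA mulmxK.
  by rewrite mulKmx.
have Xu : X \in unitmx.
  have : X *m Y \in unitmx by rewrite -AXY.
  by rewrite (unitmx_mul X Y) => /andP[-> _].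
have [w wE] : {w : 'cV[R[i]]_n | w = invmx X *m v} by eexists.
have IYE : 1%:M - Y = invmx S *m (1%:M - U') *m S.
  by rewrite YE mulmxBr mulmxBl mulmx1 mulVmx.
have IYu : (1%:M - Y) \in unitmx.
  rewrite IYE !unitmx_mul unitmx_inv Su andbT /=.
  rewrite unitmxE -det_tr det_trig ?unitfE.
    apply/prodf_neq0 => i _; rewrite !mxE eqxx mulr1n U'E subr_eq0 eq_sym.
    by apply: b1.
  apply/is_trig_mxP => i j ij; rewrite !mxE.
  move/is_trig_mxP: U't => /(_ i j ij); rewrite mxE => ->; rewrite subr0.
  by have /negbTE -> : j != i by rewrite -val_eqE /= gtn_eqF.
have [u uE] : {u : 'cV[R[i]]_n | u = invmx (1%:M - Y) *m w} by eexists.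
have P1Su : P1 *m S \in unitmx by rewrite unitmx_mul P1u Su.
have Q2Su : Q2 *m S \in unitmx by rewrite unitmx_mul Q2u Su.
have iP1S : invmx S *m invmx P1 = invmx (P1 *m S).
  have h : invmx S *m invmx P1 *m (P1 *m S) = 1%:M.
    by rewrite mulmxA mulmxKV // mulVmx.
  by rewrite -[LHS](mulmxK P1Su) h mul1mx.
have iQ2S : invmx S *m invmx Q2 = invmx (Q2 *m S).
  have h : invmx S *m invmx Q2 *m (Q2 *m S) = 1%:M.
    by rewrite mulmxA mulmxKV // mulVmx.
  by rewrite -[LHS](mulmxK Q2Su) h mul1mx.
pose x1 : aff R n := (invmx (P1 *m S), 0).
pose x1i : aff R n := (P1 *m S, 0).
pose b1' : aff R n := (diag_mx e1, 0).
pose x2 : aff R n := (invmx (Q2 *m S), u).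
pose x2i : aff R n := (Q2 *m S, - (Q2 *m S *m u)).
pose b2' : aff R n := (diag_mx e2, 0).
have x1x1i : aff_mul x1 x1i = aff_one R n.
  by rewrite /aff_mul /x1 /x1i /aff_one /= (mulVmx P1Su) mulmx0 addr0.
have x1ix1 : aff_mul x1i x1 = aff_one R n.
  by rewrite /aff_mul /x1 /x1i /aff_one /= (mulmxV P1Su) mulmx0 addr0.
have x2x2i : aff_mul x2 x2i = aff_one R n.
  by rewrite /aff_mul /x2 /x2i /aff_one /= (mulVmx Q2Su) mulmxN mulmxA (mulVmx Q2Su) mul1mx addNr.
have x2ix2 : aff_mul x2i x2 = aff_one R n.
  by rewrite /aff_mul /x2 /x2i /aff_one /= (mulmxV Q2Su) subrr.
have XE' : aff_mul x1 (aff_mul b1' x1i) = (X, 0).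
  rewrite /aff_mul /x1 /b1' /x1i /= !mulmx0 !addr0; congr pair; last by rewrite mulmx0.
  by rewrite XE L'E2 -iP1S !mulmxA.
have Yeq : invmx (Q2 *m S) *m (diag_mx e2 *m (Q2 *m S)) = Y.
  by rewrite YE U'E2 -iQ2S !mulmxA.
have YE' : aff_mul x2 (aff_mul b2' x2i) = (Y, w).
  rewrite /aff_mul /x2 /b2' /x2i /= addr0 Yeq; congr pair.
  rewrite !mulmxN (mulmxA (diag_mx e2)) (mulmxA (invmx (Q2 *m S))) Yeq.
  have e : (1%:M - Y) *m u = w by rewrite uE (mulKVmx IYu).
  by rewrite -e mulmxBl mul1mx addrC.
have b1c : coninvolution b1' by apply: (@diag_coninv R n e1).
have b2c : coninvolution b2' by apply: (@diag_coninv R n e2).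
have [c1 c2 p12] := @two_coninv _ _ x1 x1i b1' x1x1i x1ix1 b1c.
have [c3 c4 p34] := @two_coninv _ _ x2 x2i b2' x2x2i x2ix2 b2c.
move: c1 c2 p12 c3 c4 p34.
set h1 := aff_mul x1 (aff_conj x1i).
set h2 := aff_mul (aff_conj x1) (aff_mul b1' x1i).
set h3 := aff_mul x2 (aff_conj x2i).
set h4 := aff_mul (aff_conj x2) (aff_mul b2' x2i).
move=> c1 c2 p12 c3 c4 p34.
exists [:: h1; h2; h3; h4]; split => //.
  move=> h; rewrite !inE => /or4P [] /eqP ->.
  - by split; [exact: (@coninv_Aff _ _ _ c1) | exact: c1].
  - by split; [exact: (@coninv_Aff _ _ _ c2) | exact: c2].
  - by split; [exact: (@coninv_Aff _ _ _ c3) | exact: c3].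
  - by split; [exact: (@coninv_Aff _ _ _ c4) | exact: c4].
have -> : aff_prod [:: h1; h2; h3; h4] =
  aff_mul h1 (aff_mul h2 (aff_mul h3 (aff_mul h4 (aff_one R n)))) by [].
rewrite aff_mulg1 (@aff_mulA _ _ h1 h2) p12 p34 XE' YE'.
by rewrite /aff_mul /= addr0 -AXY wE (mulKVmx Xu).
Qed.
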